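(* For $0<c<1$ let $d_c=\sup_{x\in(0,1)}\frac{\ln(1-cx^2)}{\ln(1-x)}$ and let $x_c\in(0,1)$ be the point where this supremum is attained. Then $$x_c=\frac{1+\sqrt{1-\frac{d_c}{c}(2-d_c)}}{2-d_c}.$$ Moreover, the function $\psi(c)=d_c/c$ is increasing on $(0,1)$ and $\lim_{c\to0^+}\psi(c)=m_0(2):=\sup_{x\in(0,1)}\frac{x^2}{-\ln(1-x)}$. *)

(* Defs.v *)
From Stdlib Require Import Reals.
From Coquelicot Require Import Coquelicot.
Open Scope R_scope.

Definition ratio (c x : R) : R := ln (1 - c * x ^ 2) / ln (1 - x).

Definition dc (c : R) : R :=
  real (Lub_Rbar (fun y => exists x, 0 < x < 1 /\ y = ratio c x)).

Definition psi (c : R) : R := dc c / c.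

Definition m0_2 : R :=
  real (Lub_Rbar (fun y => exists x, 0 < x < 1 /\ y = x ^ 2 / (- ln (1 - x)))).

(* Main.v *)
Require Import Defs.
From Stdlib Require Import Reals Lra Psatz.
From Coquelicot Require Import Coquelicot.
Open Scope R_scope.

Lemma lub_facts (E : R -> Prop) (M : R) :
  (exists y, E y) -> (forall y, E y -> y <= M) ->
  (forall y, E y -> y <= real (Lub_Rbar E)) /\
  (forall b, (forall y, E y -> y <= b) -> real (Lub_Rbar E) <= b).
Proof.
  intros [y0 Hy0] HM.
  destruct (Lub_Rbar_correct E) as [Hub Hlub].
  destruct (Lub_Rbar E) as [l| |] eqn:El.
  - split.
    + intros y Hy. exact (Hub y Hy).
    + intros b Hb. exact (Hlub (Finite b) Hb).
  - exfalso. exact (Hlub (Finite M) HM).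
  - exfalso. exact (Hub y0 Hy0).
Qed.

Lemma ln_le_lin (y : R) : 0 < y -> ln y <= y - 1.
Proof.
  intros Hy. pose proof (exp_ineq1_le (ln y)). rewrite exp_ln in H; lra.
Qed.

Lemma ln_lt_lin (y : R) : 0 < y -> y <> 1 -> ln y < y - 1.
Proof.
  intros Hy H1. assert (ln y <> 0).
  { intro E. apply H1. rewrite <- (exp_ln y Hy), E, exp_0. reflexivity. }
  pose proof (exp_ineq1 (ln y) H). rewrite exp_ln in H0; lra.
Qed.

Lemma mlog_lower (t : R) : t < 1 -> t <= - ln (1 - t).
Proof. intros. pose proof (ln_le_lin (1 - t)). lra. Qed.

Lemma mlog_upper (t : R) : t < 1 -> - ln (1 - t) <= t / (1 - t).
Proof.
  intros. assert (0 < / (1 - t)) by (apply Rinv_0_lt_compat; lra).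
  pose proof (ln_le_lin (/ (1 - t)) H0).
  rewrite ln_Rinv in H1 by lra.
  assert (/ (1 - t) - 1 = t / (1 - t)) by (field; lra). lra.
Qed.

Lemma mlog_upper_strict (t : R) : 0 < t < 1 -> - ln (1 - t) < t / (1 - t).
Proof.
  intros. pose proof (ln_lt_lin (/ (1 - t))).
  rewrite ln_Rinv in H0 by lra.
  assert (/ (1 - t) - 1 = t / (1 - t)) by (field; lra).
  assert (/ (1 - t) <> 1).
  { intro E. apply (f_equal Rinv) in E. rewrite Rinv_inv, Rinv_1 in E. lra. }
  assert (0 < / (1 - t)) by (apply Rinv_0_lt_compat; lra).
  specialize (H0 H3 H2). lra.
Qed.

Lemma mlog_pos (t : R) : 0 < t < 1 -> 0 < - ln (1 - t).
Proof. intros. pose proof (mlog_lower t). lra. Qed.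

Lemma incr_open (f f' : R -> R) lo hi :
  (forall t, lo < t < hi -> derivable_pt_lim f t (f' t)) ->
  (forall t, lo < t < hi -> 0 < f' t) ->
  forall x y, lo < x -> x < y -> y < hi -> f x < f y.
Proof.
  intros Hd Hp x y H1 H2 H3.
  destruct (MVT_cor2 f f' x y H2) as [z [Ez Hz]].
  { intros z Hz. apply Hd. lra. }
  assert (0 < f' z) by (apply Hp; lra).
  assert (0 < f' z * (y - x)) by (apply Rmult_lt_0_compat; lra). lra.
Qed.

Lemma ratio_bounds (c x : R) : 0 < c < 1 -> 0 < x < 1 ->
  x ^ 2 / (- ln (1 - x)) <= ratio c x / c /\
  ratio c x / c <= x ^ 2 / (- ln (1 - x)) / (1 - c) /\
  0 < ratio c x < 1.
Proof.
  intros Hc Hx. unfold ratio.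
  assert (HB : 0 < - ln (1 - x)) by (apply mlog_pos; lra).
  assert (Hx2 : 0 < x ^ 2 < 1) by (simpl; split; nra).
  assert (Ht : 0 < c * x ^ 2 < 1) by (split; nra).
  pose proof (mlog_lower (c * x ^ 2) ltac:(lra)) as L.
  pose proof (mlog_upper (c * x ^ 2) ltac:(lra)) as U.
  assert (AB : - ln (1 - c * x ^ 2) < - ln (1 - x)).
  { assert (ln (1 - x) < ln (1 - c * x ^ 2)) by (apply ln_increasing; nra). lra. }
  assert (E : ln (1 - c * x ^ 2) / ln (1 - x) = (- ln (1 - c * x ^ 2)) / (- ln (1 - x))).
  { field. lra. }
  rewrite E.
  set (A := - ln (1 - c * x ^ 2)) in *. set (B := - ln (1 - x)) in *.
  clearbody A B.
  assert (U2 : A <= c * x ^ 2 / (1 - c)).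
  { apply Rle_trans with (1 := U). apply Rmult_le_compat_l; [nra|].
    apply Rinv_le_contravar; nra. }
  repeat split.
  - apply (Rmult_le_reg_r (c * B)); [nra|].
    replace (x ^ 2 / B * (c * B)) with (c * x ^ 2) by (field; lra).
    replace (A / B / c * (c * B)) with A by (field; lra). lra.
  - apply (Rmult_le_reg_r (c * B * (1 - c))); [repeat apply Rmult_lt_0_compat; lra|].
    replace (A / B / c * (c * B * (1 - c))) with (A * (1 - c)) by (field; lra).
    replace (x ^ 2 / B / (1 - c) * (c * B * (1 - c))) with (c * x ^ 2) by (field; lra).
    apply (Rmult_le_compat_r (1 - c)) in U2; [|lra].
    replace (c * x ^ 2 / (1 - c) * (1 - c)) with (c * x ^ 2) in U2 by (field; lra). lra.
  - apply Rdiv_lt_0_compat; nra.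
  - apply (Rmult_lt_reg_r B); [lra|]. replace (A / B * B) with A by (field; lra). lra.
Qed.

Lemma ratio_cont (c x : R) : 0 < c < 1 -> 0 < x < 1 -> continuity_pt (ratio c) x.
Proof.
  intros Hc Hx. apply continuity_pt_filterlim. apply (ex_derive_continuous (ratio c)).
  unfold ratio. auto_derive.
  assert (ln (1 - x) < 0) by (rewrite <- ln_1; apply ln_increasing; lra).
  repeat split; try lra; simpl; try nra.
  replace (1 + - x) with (1 - x) by ring. lra.
Qed.

Lemma h_deriv (c d y : R) : 0 < c < 1 -> 0 < y < 1 ->
  derivable_pt_lim (fun y => ln (1 - c * y ^ 2) - d * ln (1 - y)) y
   (((2 - d) * c * y ^ 2 - 2 * c * y + d) / ((1 - c * y ^ 2) * (1 - y))).
Proof.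
  intros Hc Hy. apply is_derive_Reals. auto_derive.
  - repeat split; try lra. simpl. nra.
  - assert (0 < 1 - c * y ^ 2) by (simpl; nra). field. lra.
Qed.

Lemma phi_deriv (t : R) : 0 < t < 1 ->
  derivable_pt_lim (fun t => - ln (1 - t) / t) t ((t / (1 - t) + ln (1 - t)) / t ^ 2).
Proof.
  intros Ht. apply is_derive_Reals. auto_derive.
  - repeat split; lra.
  - replace (1 + - t) with (1 - t) by ring. field. lra.
Qed.

Lemma phi_incr (s t : R) : 0 < s -> s < t -> t < 1 -> - ln (1 - s) / s < - ln (1 - t) / t.
Proof.
  intros. apply (incr_open (fun t => - ln (1 - t) / t) (fun t => (t / (1 - t) + ln (1 - t)) / t ^ 2) 0 1); auto.
  - intros. apply phi_deriv; lra.
  - intros u Hu. pose proof (mlog_upper_strict u Hu). apply Rdiv_lt_0_compat.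
    + lra.
    + simpl. nra.
Qed.

Lemma ratio_phi (c x : R) : 0 < c < 1 -> 0 < x < 1 ->
  ratio c x / c = (- ln (1 - c * x ^ 2) / (c * x ^ 2)) * (x ^ 2 / (- ln (1 - x))).
Proof.
  intros. unfold ratio. pose proof (mlog_pos x H0).
  assert (0 < x ^ 2) by (simpl; nra). field. repeat split; lra.
Qed.

Lemma ratio_small (c y : R) : 0 < c < 1 -> 0 < y <= 1/4 -> ratio c y <= 2 * y.
Proof.
  intros Hc Hy. unfold ratio.
  assert (Hy2 : 0 < y ^ 2 <= 1/16) by (simpl; split; nra).
  assert (Ht : 0 < c * y ^ 2 <= 1/16) by (split; nra).
  pose proof (mlog_upper (c * y ^ 2) ltac:(lra)) as U.
  pose proof (mlog_lower y ltac:(lra)) as L.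
  assert (E : ln (1 - c * y ^ 2) / ln (1 - y) = (- ln (1 - c * y ^ 2)) / (- ln (1 - y))).
  { field. lra. }
  rewrite E.
  set (A := - ln (1 - c * y ^ 2)) in *. set (B := - ln (1 - y)) in *. clearbody A B.
  assert (A <= 2 * y ^ 2).
  { apply Rle_trans with (1 := U).
    apply (Rmult_le_reg_r (1 - c * y ^ 2)); [lra|].
    replace (c * y ^ 2 / (1 - c * y ^ 2) * (1 - c * y ^ 2)) with (c * y ^ 2) by (field; lra).
    nra. }
  apply (Rmult_le_reg_r B); [lra|]. replace (A / B * B) with A by (field; lra).
  simpl in *. nra.
Qed.

Lemma ratio_large (c y : R) : 0 < c < 1 -> 0 < y < 1 -> ratio c y < - ln (1 - c) / (- ln (1 - y)).
Proof.
  intros Hc Hy. unfold ratio.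
  pose proof (mlog_pos y Hy).
  assert (Hy2 : 0 < y ^ 2 < 1) by (simpl; split; nra).
  assert (ln (1 - c) < ln (1 - c * y ^ 2)) by (apply ln_increasing; nra).
  assert (E : ln (1 - c * y ^ 2) / ln (1 - y) = (- ln (1 - c * y ^ 2)) / (- ln (1 - y))).
  { field. lra. }
  rewrite E. unfold Rdiv. apply Rmult_lt_compat_r. apply Rinv_0_lt_compat; lra. lra.
Qed.

Lemma dc_attained (c : R) : 0 < c < 1 ->
  exists x, 0 < x < 1 /\ ratio c x = dc c /\ (forall y, 0 < y < 1 -> ratio c y <= dc c).
Proof.
  intros Hc.
  set (v := ratio c (1/2)).
  assert (Hv : 0 < v) by (apply (ratio_bounds c (1/2)); lra).
  set (a := Rmin (1/4) (v/4)).
  assert (Ha : 0 < a <= 1/4 /\ a <= v/4) by (unfold a; split; [split|]; [apply Rmin_glb_lt|apply Rmin_l|apply Rmin_r]; lra).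
  set (K := - ln (1 - c)).
  assert (HK : 0 < K) by (apply mlog_pos; lra).
  set (b := Rmax (3/4) (1 - exp (- (K / v)))).
  assert (Hb : 3/4 <= b < 1 /\ 1 - exp (- (K / v)) <= b).
  { pose proof (exp_pos (- (K / v))). unfold b. split; [split|].
    apply Rmax_l. apply Rmax_lub_lt; lra. apply Rmax_r. }
  destruct (continuity_ab_maj (ratio c) a b ltac:(lra)) as [M [HM HMab]].
  { intros z Hz. apply ratio_cont; lra. }
  assert (HvM : v <= ratio c M) by (apply HM; lra).
  assert (Hall : forall y, 0 < y < 1 -> ratio c y <= ratio c M).
  { intros y Hy.
    destruct (Rlt_le_dec y a) as [Hya|Hya].
    { pose proof (ratio_small c y Hc ltac:(lra)). lra. }
    destruct (Rle_lt_dec y b) as [Hyb|Hyb].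
    { apply HM; lra. }
    pose proof (ratio_large c y Hc Hy).
    assert (K / v <= - ln (1 - y)).
    { assert (1 - y <= exp (- (K / v))) by lra.
      assert (ln (1 - y) <= - (K / v)).
      { rewrite <- (ln_exp (- (K / v))). apply ln_le; lra. }
      lra. }
    assert (K / (- ln (1 - y)) <= v).
    { pose proof (mlog_pos y Hy). apply (Rmult_le_reg_r (- ln (1 - y))); [lra|].
      replace (K / - ln (1 - y) * - ln (1 - y)) with K by (field; lra).
      apply (Rmult_le_compat_r v) in H0; [|lra].
      replace (K / v * v) with K in H0 by (field; lra). lra. }
    unfold K in *. lra. }
  destruct (lub_facts (fun y => exists x, 0 < x < 1 /\ y = ratio c x) 1) as [U1 U2].
  { exists (ratio c (1/2)). exists (1/2). split; [lra|reflexivity]. }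
  { intros y [x [Hx ->]]. pose proof (ratio_bounds c x Hc Hx). lra. }
  assert (Edc : dc c = ratio c M).
  { unfold dc. apply Rle_antisym.
    - apply U2. intros y [x [Hx ->]]. apply Hall; exact Hx.
    - apply U1. exists M. split; [lra|reflexivity]. }
  exists M. split; [lra|]. split; [auto|]. rewrite Edc. exact Hall.
Qed.

Lemma formula (c x : R) : 0 < c < 1 -> 0 < x < 1 -> ratio c x = dc c ->
  x = (1 + sqrt (1 - (dc c / c) * (2 - dc c))) / (2 - dc c).
Proof.
  intros Hc Hx Hrx.
  destruct (dc_attained c Hc) as [_ [_ [_ Hall]]].
  set (d := dc c) in *. clearbody d.
  pose proof (ratio_bounds c x Hc Hx) as [_ [_ Hd]]. rewrite Hrx in Hd.
  set (h := fun y => ln (1 - c * y ^ 2) - d * ln (1 - y)).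
  set (q := fun y => (2 - d) * c * y ^ 2 - 2 * c * y + d).
  assert (Hh : forall y, 0 < y < 1 -> 0 <= h y).
  { intros y Hy. specialize (Hall y Hy). unfold ratio in Hall. unfold h.
    assert (ln (1 - y) < 0) by (rewrite <- ln_1; apply ln_increasing; lra).
    assert (ln (1 - c * y ^ 2) = ln (1 - c * y ^ 2) / ln (1 - y) * ln (1 - y)) by (field; lra).
    rewrite H0. nra. }
  assert (Hhx : h x = 0).
  { unfold h. unfold ratio in Hrx. assert (ln (1 - x) < 0) by (rewrite <- ln_1; apply ln_increasing; lra).
    rewrite <- Hrx. field. lra. }
  assert (HP : forall y, 0 < y < 1 -> 0 < (1 - c * y ^ 2) * (1 - y)).
  { intros y Hy. assert (0 < y ^ 2 < 1) by (simpl; split; nra). apply Rmult_lt_0_compat; nra. }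
  assert (Hqx : q x = 0).
  { pose proof (h_deriv c d x Hc Hx) as Hd'.
    assert (Hmin : forall y, 0 < y -> y < 1 -> h x <= h y).
    { intros y H1 H2. rewrite Hhx. apply Hh; lra. }
    pose proof (deriv_minimum h 0 1 x (exist _ _ Hd') ltac:(lra) ltac:(lra) Hmin) as F.
    rewrite (derive_pt_eq_0 h x _ _ Hd') in F.
    specialize (HP x Hx).
    apply (f_equal (fun u => u * ((1 - c * x ^ 2) * (1 - x)))) in F.
    assert (0 < x ^ 2 < 1) by (simpl; split; nra).
    assert (1 - c * x ^ 2 <> 0) by nra.
    unfold q. rewrite Rmult_0_l in F. rewrite <- F. field. split; auto; lra. }
  unfold q in Hqx.
  assert (Edisc : 1 - d / c * (2 - d) = ((2 - d) * x - 1) ^ 2).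
  { replace d with (c * (2 * x - (2 - d) * x ^ 2)) at 1 by lra. field. lra. }
  rewrite Edisc.
  destruct (Rle_lt_dec 0 ((2 - d) * x - 1)) as [Hw|Hw].
  { rewrite sqrt_pow2 by exact Hw. field. lra. }
  exfalso.
  set (e := 1 - (2 - d) * x).
  set (y := x + Rmin (e / 2) ((1 - x) / 2)).
  assert (Hy : x < y /\ y <= x + e / 2 /\ y <= x + (1 - x) / 2).
  { assert (0 < e) by (unfold e; lra).
    pose proof (Rmin_l (e / 2) ((1 - x) / 2)). pose proof (Rmin_r (e / 2) ((1 - x) / 2)).
    assert (0 < Rmin (e / 2) ((1 - x) / 2)) by (apply Rmin_glb_lt; lra).
    unfold y. lra. }
  assert (He : 0 < e) by (unfold e; lra).
  destruct (MVT_cor2 h (fun y => ((2 - d) * c * y ^ 2 - 2 * c * y + d) / ((1 - c * y ^ 2) * (1 - y))) x y ltac:(lra)) as [z [Ez Hz]].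
  { intros z Hz. apply h_deriv; lra. }
  rewrite Hhx in Ez.
  assert (Hqz : (2 - d) * c * z ^ 2 - 2 * c * z + d < 0).
  { assert ((2 - d) * c * z ^ 2 - 2 * c * z + d = c * (z - x) * ((2 - d) * (z + x) - 2)) by (simpl in *; nra).
    rewrite H. assert ((2 - d) * (z + x) - 2 < 0) by (unfold e in *; nra).
    assert (0 < c * (z - x)) by nra. nra. }
  assert (0 < / ((1 - c * z ^ 2) * (1 - z))) by (apply Rinv_0_lt_compat; apply HP; lra).
  assert (h y < 0).
  { replace (h y) with (h y - 0) by ring. rewrite Ez. unfold Rdiv. assert (0 < y - x) by lra.
    assert (((2 - d) * c * z ^ 2 - 2 * c * z + d) * / ((1 - c * z ^ 2) * (1 - z)) < 0) by nra. nra. }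
  pose proof (Hh y ltac:(lra)). lra.
Qed.

Lemma psi_incr (c1 c2 : R) : 0 < c1 -> c1 < c2 -> c2 < 1 -> psi c1 < psi c2.
Proof.
  intros H1 H2 H3. unfold psi.
  destruct (dc_attained c1 ltac:(lra)) as [x [Hx [E1 _]]].
  destruct (dc_attained c2 ltac:(lra)) as [_ [_ [_ A2]]].
  rewrite <- E1.
  rewrite (ratio_phi c1 x ltac:(lra) Hx).
  assert (ratio c2 x / c2 <= dc c2 / c2).
  { unfold Rdiv. apply Rmult_le_compat_r. left; apply Rinv_0_lt_compat; lra. apply A2; lra. }
  rewrite (ratio_phi c2 x ltac:(lra) Hx) in H.
  assert (0 < x ^ 2 < 1) by (simpl; split; nra).
  pose proof (mlog_pos x Hx).
  assert (0 < x ^ 2 / - ln (1 - x)) by (apply Rdiv_lt_0_compat; lra).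
  assert (- ln (1 - c1 * x ^ 2) / (c1 * x ^ 2) < - ln (1 - c2 * x ^ 2) / (c2 * x ^ 2)).
  { apply phi_incr; nra. }
  nra.
Qed.

Lemma m0_facts : 0 <= m0_2 <= 1 /\
  (forall x, 0 < x < 1 -> x ^ 2 / (- ln (1 - x)) <= m0_2) /\
  (forall b, (forall x, 0 < x < 1 -> x ^ 2 / (- ln (1 - x)) <= b) -> m0_2 <= b).
Proof.
  assert (Hg : forall x, 0 < x < 1 -> 0 < x ^ 2 / (- ln (1 - x)) <= 1).
  { intros x Hx. pose proof (mlog_lower x ltac:(lra)). pose proof (mlog_pos x Hx).
    split. apply Rdiv_lt_0_compat; [simpl; nra|lra].
    apply (Rmult_le_reg_r (- ln (1 - x))); [lra|].
    replace (x ^ 2 / - ln (1 - x) * - ln (1 - x)) with (x ^ 2) by (field; lra). simpl; nra. }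
  destruct (lub_facts (fun y => exists x, 0 < x < 1 /\ y = x ^ 2 / (- ln (1 - x))) 1) as [U1 U2].
  { exists ((1/2) ^ 2 / (- ln (1 - 1/2))). exists (1/2). split; [lra|reflexivity]. }
  { intros y [x [Hx ->]]. apply Hg; auto. }
  unfold m0_2. split; [split|split].
  - apply Rle_trans with ((1/2) ^ 2 / (- ln (1 - 1/2))). left; apply Hg; lra.
    apply U1. exists (1/2). split; [lra|reflexivity].
  - apply U2. intros y [x [Hx ->]]. apply Hg; auto.
  - intros x Hx. apply U1. exists x. split; [auto|reflexivity].
  - intros b Hb. apply U2. intros y [x [Hx ->]]. apply Hb; auto.
Qed.

Lemma psi_bounds (c : R) : 0 < c < 1 -> m0_2 <= psi c <= m0_2 / (1 - c).
Proof.
  intros Hc. destruct m0_facts as [Hm [M1 M2]].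
  destruct (dc_attained c Hc) as [xc [Hxc [Ec Hall]]].
  unfold psi. split.
  - apply M2. intros x Hx. pose proof (ratio_bounds c x Hc Hx) as [L _].
    apply Rle_trans with (1 := L). unfold Rdiv. apply Rmult_le_compat_r.
    left; apply Rinv_0_lt_compat; lra. apply Hall; auto.
  - rewrite <- Ec. pose proof (ratio_bounds c xc Hc Hxc) as [_ [U _]].
    apply Rle_trans with (1 := U). unfold Rdiv. apply Rmult_le_compat_r.
    left; apply Rinv_0_lt_compat; lra. apply M1; auto.
Qed.

Lemma psi_lim : filterlim psi (at_right 0) (locally m0_2).
Proof.
  apply filterlim_locally. intros eps.
  assert (Hd : 0 < Rmin (eps / 4) (1 / 2)) by (apply Rmin_glb_lt; pose proof (cond_pos eps); lra).
  exists (mkposreal _ Hd). intros y Hy Hpos.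
  unfold ball in *; simpl in *. unfold AbsRing_ball, abs, minus, plus, opp in *; simpl in *.
  pose proof (Rmin_l (eps / 4) (1 / 2)). pose proof (Rmin_r (eps / 4) (1 / 2)).
  replace (y + - 0) with y in Hy by ring. rewrite Rabs_pos_eq in Hy by lra.
  destruct m0_facts as [Hm _].
  destruct (psi_bounds y ltac:(lra)) as [L U].
  assert (m0_2 / (1 - y) - m0_2 <= 2 * y).
  { replace (m0_2 / (1 - y) - m0_2) with (m0_2 * y / (1 - y)) by (field; lra).
    apply (Rmult_le_reg_r (1 - y)); [lra|].
    replace (m0_2 * y / (1 - y) * (1 - y)) with (m0_2 * y) by (field; lra). nra. }
  rewrite Rabs_pos_eq by lra. lra.
Qed.

Theorem mainTheorem5 :
  (forall c, 0 < c < 1 ->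
     (exists x, 0 < x < 1 /\ ratio c x = dc c) /\
     (forall x, 0 < x < 1 -> ratio c x = dc c ->
        x = (1 + sqrt (1 - (dc c / c) * (2 - dc c))) / (2 - dc c))) /\
  (forall c1 c2, 0 < c1 -> c1 < c2 -> c2 < 1 -> psi c1 < psi c2) /\
  filterlim psi (at_right 0) (locally m0_2).
Proof.
  split; [|split].
  - intros c Hc. split.
    + destruct (dc_attained c Hc) as [x [Hx [E _]]]. exists x. auto.
    + intros x Hx E. apply formula; auto.
  - apply psi_incr.
  - apply psi_lim.
Qed.
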